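(* Assume $\Gamma\vdash t:\tau$ and let $N\in\mathbb{N}$ with $N\ge|\mathrm{FV}(t)|$. If $t\to t'$, then $$\pi(t)(N)+\mathrm{len}(t)>\pi(t')(N)+\mathrm{len}(t').$$ In particular, every reduction sequence $t=t_0\to t_1\to\cdots\to t_k$ starting from $t$ has length $k\le\pi(t)(|\mathrm{FV}(t)|)+\mathrm{len}(t)$.
   Context: Types: $\rho,\tau::=\Diamond\mid\mathbf{B}\mid\tau\multimap\rho\mid\tau\otimes\rho\mid\tau\times\rho\mid\mathbf{L}(\tau)$. Raw terms: $r,s,t::=x^\tau\mid c\mid\lambda x^\tau.\,t\mid\langle t,s\rangle\mid ts\mid\{t\}$, where each variable $x^\tau$ carries a type (infinitely many variables of each type), application associates to the left, terms are identified up to renaming of bound variables ($\lambda$ is the only binder), and the constants $c$ with their types are $\mathsf{tt},\mathsf{ff}:\mathbf{B}$; $\mathsf{nil}_\tau:\mathbf{L}(\tau)$; $\mathsf{cons}_\tau:\Diamond\multimap\tau\multimap\mathbf{L}(\tau)\multimap\mathbf{L}(\tau)$; $\otimes_{\tau,\rho}:\tau\multimap\rho\multimap\tau\otimes\rho$. A context is a finite set of typed variables; $\Gamma_1,\Gamma_2$ denotes $\Gamma_1\cup\Gamma_2$ and presupposes $\Gamma_1\cap\Gamma_2=\emptyset$; $x^\tau$ also denotes $\{x^\tau\}$. The relation $\Gamma\vdash t:\tau$ is inductively defined by: (Var) $\Gamma,x^\tau\vdash x:\tau$; (Const) $\Gamma\vdash c:\tau$ for a constant $c$ of type $\tau$;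 ($\multimap^+$) from $\Gamma\cup\{x^\tau\}\vdash t:\rho$ infer $\Gamma\vdash\lambda x^\tau.t:\tau\multimap\rho$; ($\multimap^-$) from $\Gamma_1\vdash t:\tau\multimap\rho$ and $\Gamma_2\vdash s:\tau$ infer $\Gamma_1,\Gamma_2\vdash ts:\rho$; ($\times^+$) from $\Gamma\vdash t:\tau$ and $\Gamma\vdash s:\rho$ infer $\Gamma\vdash\langle t,s\rangle:\tau\times\rho$; ($\times^-_1$) from $\Gamma\vdash t:\tau\times\rho$ infer $\Gamma\vdash t\,\mathsf{tt}:\tau$; ($\times^-_0$) from $\Gamma\vdash t:\tau\times\rho$ infer $\Gamma\vdash t\,\mathsf{ff}:\rho$; ($\mathbf{B}^-$) from $\Gamma_1\vdash t:\mathbf{B}$, $\Gamma_2\vdash s:\tau$, $\Gamma_2\vdash r:\tau$ infer $\Gamma_1,\Gamma_2\vdash t\langle s,r\rangle:\tau$; ($\otimes^-$) from $\Gamma_1\vdash t:\tau\otimes\rho$ and $\Gamma_2,x^\tau,y^\rho\vdash s:\sigma$ infer $\Gamma_1,\Gamma_2\vdash t(\lambda x^\tau.\lambda y^\rho.s):\sigma$; ($\mathbf{L}^-$) from $\Gamma\vdash t:\mathbf{L}(\tau)$ and $\emptyset\vdash s:\Diamond\multimap\tau\multimap\rho\multimap\rho$ infer $\Gamma\vdash t\{s\}:\rho\multimap\rho$. $\mathrm{FV}(t)$ is the set of free variables of $t$. Lists: a list with $n$ entries ($n\ge0$) is a term $\mathsf{cons}_\tau d_1a_1(\mathsf{cons}_\tau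 d_2a_2(\cdots(\mathsf{cons}_\tau d_na_n\,\mathsf{nil}_\tau)\cdots))$ where the $d_i$ are arbitrary terms of type $\Diamond$ and the $a_i$ arbitrary terms of type $\tau$ (for $n=0$ this is $\mathsf{nil}_\tau$). Conversions $\mapsto$: $(\lambda x.t)s\mapsto t[s/x]$; $\langle t,s\rangle\mathsf{tt}\mapsto t$; $\langle t,s\rangle\mathsf{ff}\mapsto s$; $\mathsf{tt}\langle t,s\rangle\mapsto t$; $\mathsf{ff}\langle t,s\rangle\mapsto s$; $\otimes_{\tau,\rho}ts(\lambda x^\tau.\lambda y^\rho.r)\mapsto r[t,s/x,y]$ (simultaneous substitution); $\mathsf{nil}_\tau\{t\}s\mapsto s$; $\mathsf{cons}_\tau d\,a\,\ell\{t\}s\mapsto t\,d\,a\,(\ell\{t\}s)$ provided $\ell$ is a list. The reduction relation $\to$ is inductively defined by: if $t\mapsto t'$ then $t\to t'$; if $t\to t'$ then $ts\to t's$; if $s\to s'$ then $ts\to ts'$ (no reduction under $\lambda$, inside pairs, or inside braces). Length: $\mathrm{len}(c)=\mathrm{len}(x)=1$; $\mathrm{len}(ts)=\mathrm{len}(t)+\mathrm{len}(s)$; $\mathrm{len}(\lambda x.s)=\mathrm{len}(s)+1$; $\mathrm{len}(\langle t,s\rangle)=\max(\mathrm{len}(t),\mathrm{len}(s))+1$; $\mathrm{len}(\{t\})=0$. $\mathbb{N}^{\mathrm{poly}}$ is the set of functions $\mathbb{N}\to\mathbb{N}$ pointwise bounded by a polynomial; $X$ is the identity, $X_n(m)=\min(n,m)$,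 natural numbers are identified with constant functions, $+,\cdot,\sup$ are pointwise sum, product and maximum. For every raw term $t$ define $\pi(t)\in\mathbb{N}^{\mathrm{poly}}$ by recursion: $\pi(x)=\pi(c)=0$; $\pi(ts)=\pi(t)+X_n\cdot\pi(h)+X_n\cdot\mathrm{len}(h)$ if $t$ is a list with $n$ entries and $s=\{h\}$, and $\pi(ts)=\pi(t)+\pi(s)$ otherwise; $\pi(\lambda x.t)=\pi(t)$; $\pi(\langle t,s\rangle)=\sup(\pi(t),\pi(s))$; $\pi(\{h\})=X\cdot\pi(h)+X\cdot\mathrm{len}(h)$. *)

(* Defs.v *)
(* Locally nameless representation of the raw terms:
   bound variables are de Bruijn indices (so alpha-equivalent terms are
   syntactically equal), free variables are named and typed. *)
From Stdlib Require Import Arith List Lia.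
Import ListNotations.

Inductive ty : Type :=
| TDiamond : ty
| TBool : ty
| TLolli : ty -> ty -> ty
| TTensor : ty -> ty -> ty
| TWith : ty -> ty -> ty
| TList : ty -> ty.

Definition ty_eq_dec : forall a b : ty, {a = b} + {a <> b}.
Proof. decide equality. Defined.

Definition var : Type := (nat * ty)%type.

Definition var_eq_dec : forall a b : var, {a = b} + {a <> b}.
Proof. decide equality; [apply ty_eq_dec | apply Nat.eq_dec]. Defined.

Inductive const : Type :=
| CTt : const
| CFf : const
| CNil : ty -> const
| CCons : ty -> const
| CTens : ty -> ty -> const.

Definition const_type (c : const) : ty :=
  match c with
  | CTt => TBool
  | CFf => TBool
  | CNil t => TList t
  | CCons t => TLolli TDiamond (TLolli t (TLolli (TList t) (TList t)))
  | CTens t r => TLolli t (TLolli r (TTensor t r))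
  end.

Inductive term : Type :=
| BVar : nat -> term
| FVar : nat -> ty -> term
| Const : const -> term
| Lam : ty -> term -> term
| Pair : term -> term -> term
| App : term -> term -> term
| Brace : term -> term.

Fixpoint fv (t : term) : list var :=
  match t with
  | BVar _ => []
  | FVar x a => [(x, a)]
  | Const _ => []
  | Lam _ b => fv b
  | Pair a b => fv a ++ fv b
  | App a b => fv a ++ fv b
  | Brace b => fv b
  end.

Definition nfv (t : term) : nat := length (nodup var_eq_dec (fv t)).

Fixpoint open_rec (k : nat) (u : term) (t : term) : term :=
  match t with
  | BVar i => if Nat.eqb i k then u else BVar i
  | FVar _ _ => t
  | Const _ => t
  | Lam a b => Lam a (open_rec (S k) u b)
  | Pair a b => Pair (open_rec k u a) (open_rec k u b)
  | App a b => App (open_rec k u a) (open_rec k u b)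
  | Brace b => Brace (open_rec k u b)
  end.

Definition open (b u : term) : term := open_rec 0 u b.

(* Simultaneous opening of the body r of  lambda x. lambda y. r :
   index k (= y) gets v and index k+1 (= x) gets u, i.e. r[u, v / x, y]. *)
Fixpoint open2_rec (k : nat) (u v : term) (t : term) : term :=
  match t with
  | BVar i => if Nat.eqb i k then v else if Nat.eqb i (S k) then u else BVar i
  | FVar _ _ => t
  | Const _ => t
  | Lam a b => Lam a (open2_rec (S k) u v b)
  | Pair a b => Pair (open2_rec k u v a) (open2_rec k u v b)
  | App a b => App (open2_rec k u v a) (open2_rec k u v b)
  | Brace b => Brace (open2_rec k u v b)
  end.

Definition open2 (r u v : term) : term := open2_rec 0 u v r.

(* Contexts: finite sets of typed variables, represented by lists
   (only membership matters). *)
Definition ctx : Type := list var.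

Definition ctx_union (G G1 G2 : ctx) : Prop :=
  forall v, In v G <-> In v G1 \/ In v G2.

Definition ctx_disjoint (G1 G2 : ctx) : Prop :=
  forall v, In v G1 -> In v G2 -> False.

Inductive typed : ctx -> term -> ty -> Prop :=
| T_Var : forall G x a,
    In (x, a) G -> typed G (FVar x a) a
| T_Const : forall G c,
    typed G (Const c) (const_type c)
| T_Lam : forall G G' a r b x,
    ~ In (x, a) (fv b) ->
    (forall v, In v G' <-> In v G \/ v = (x, a)) ->
    typed G' (open b (FVar x a)) r ->
    typed G (Lam a b) (TLolli a r)
| T_App : forall G G1 G2 t s a r,
    typed G1 t (TLolli a r) -> typed G2 s a ->
    ctx_disjoint G1 G2 -> ctx_union G G1 G2 ->
    typed G (App t s) r
| T_Pair : forall G t s a r,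
    typed G t a -> typed G s r -> typed G (Pair t s) (TWith a r)
| T_Fst : forall G t a r,
    typed G t (TWith a r) -> typed G (App t (Const CTt)) a
| T_Snd : forall G t a r,
    typed G t (TWith a r) -> typed G (App t (Const CFf)) r
| T_If : forall G G1 G2 t s r a,
    typed G1 t TBool -> typed G2 s a -> typed G2 r a ->
    ctx_disjoint G1 G2 -> ctx_union G G1 G2 ->
    typed G (App t (Pair s r)) a
| T_TensE : forall G G1 G2 G2' t s a r sg x y,
    typed G1 t (TTensor a r) ->
    ~ In (x, a) (fv s) -> ~ In (y, r) (fv s) ->
    (* Gamma2, x^a, y^r : disjoint union *)
    ~ In (x, a) G2 -> ~ In (y, r) G2 -> (x, a) <> (y, r) ->
    (forall v, In v G2' <-> In v G2 \/ v = (x, a) \/ v = (y, r)) ->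
    typed G2' (open2 s (FVar x a) (FVar y r)) sg ->
    ctx_disjoint G1 G2 -> ctx_union G G1 G2 ->
    typed G (App t (Lam a (Lam r s))) sg
| T_ListE : forall G t s a r,
    typed G t (TList a) ->
    typed [] s (TLolli TDiamond (TLolli a (TLolli r r))) ->
    typed G (App t (Brace s)) (TLolli r r).

(* Lists: cons_tau d1 a1 (cons_tau d2 a2 (... (cons_tau dn an nil_tau)...)).
   Returns Some (tau, n) iff t is a list with n entries (element type tau). *)
Fixpoint list_entries (t : term) : option (ty * nat) :=
  match t with
  | Const (CNil a) => Some (a, 0)
  | App (App (App (Const (CCons a)) _) _) l =>
      match list_entries l with
      | Some (b, n) => if ty_eq_dec a b then Some (a, S n) else None
      | None => None
      end
  | _ => None
  end.

Definition list_length (t : term) : option nat :=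
  match list_entries t with Some (_, n) => Some n | None => None end.

Inductive conv : term -> term -> Prop :=
| C_Beta : forall a b s, conv (App (Lam a b) s) (open b s)
| C_Fst : forall t s, conv (App (Pair t s) (Const CTt)) t
| C_Snd : forall t s, conv (App (Pair t s) (Const CFf)) s
| C_IfT : forall t s, conv (App (Const CTt) (Pair t s)) t
| C_IfF : forall t s, conv (App (Const CFf) (Pair t s)) s
| C_Tens : forall a r t s b,
    conv (App (App (App (Const (CTens a r)) t) s) (Lam a (Lam r b))) (open2 b t s)
| C_Nil : forall a t s, conv (App (App (Const (CNil a)) (Brace t)) s) s
| C_Cons : forall a d x l t s,
    list_length l <> None ->
    conv (App (App (App (App (App (Const (CCons a)) d) x) l) (Brace t)) s)
         (App (App (App t d) x) (App (App l (Brace t)) s)).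

(* Reduction -> : no reduction under lambda, inside pairs or braces. *)
Inductive red : term -> term -> Prop :=
| R_Conv : forall t t', conv t t' -> red t t'
| R_AppL : forall t t' s, red t t' -> red (App t s) (App t' s)
| R_AppR : forall t s s', red s s' -> red (App t s) (App t s').

Fixpoint len (t : term) : nat :=
  match t with
  | BVar _ => 1
  | FVar _ _ => 1
  | Const _ => 1
  | App a b => len a + len b
  | Lam _ b => len b + 1
  | Pair a b => Nat.max (len a) (len b) + 1
  | Brace _ => 0
  end.

(* pi(t) as a function N -> N, evaluated pointwise at m. *)
Fixpoint pi (t : term) (m : nat) : nat :=
  match t with
  | BVar _ => 0
  | FVar _ _ => 0
  | Const _ => 0
  | App a b =>
      match b with
      | Brace h =>
          match list_length a with
          | Some n => pi a m + Nat.min n m * pi h m + Nat.min n m * len h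
          | None => pi a m + pi b m
          end
      | _ => pi a m + pi b m
      end
  | Lam _ b => pi b m
  | Pair a b => Nat.max (pi a m) (pi b m)
  | Brace h => m * pi h m + m * len h
  end.

(* Main.v *)
Require Import Defs.
From Stdlib Require Import Arith List Lia Bool.
Import ListNotations.

Fixpoint occF (v : var) (t : term) : nat :=
  match t with
  | BVar _ => 0
  | FVar x a => if var_eq_dec v (x, a) then 1 else 0
  | Const _ => 0
  | Lam _ b => occF v b
  | Pair a b => Nat.max (occF v a) (occF v b)
  | App a b => occF v a + occF v b
  | Brace b => occF v b + occF v b
  end.

Fixpoint occB (k : nat) (t : term) : nat :=
  match t with
  | BVar i => if Nat.eqb i k then 1 else 0
  | FVar _ _ => 0
  | Const _ => 0
  | Lam _ b => occB (S k) b
  | Pair a b => Nat.max (occB k a) (occB k b)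
  | App a b => occB k a + occB k b
  | Brace b => occB k b + occB k b
  end.

Lemma occF_In : forall v t, In v (fv t) <-> 1 <= occF v t.
Proof.
  intros v t; induction t; simpl.
  - split; [tauto| lia].
  - destruct (var_eq_dec v (n, t)) as [e|e]; split; intros H; try lia.
    + subst; auto.
    + destruct H as [H|H]; [congruence| contradiction].
  - split; [tauto| lia].
  - auto.
  - rewrite in_app_iff, IHt1, IHt2; lia.
  - rewrite in_app_iff, IHt1, IHt2; lia.
  - rewrite IHt; lia.
Qed.

Lemma occF_notIn : forall v t, ~ In v (fv t) -> occF v t = 0.
Proof. intros v t H. destruct (occF v t) eqn:E; auto. exfalso; apply H, occF_In; lia. Qed.

Lemma occB_zero_open : forall t k s, occB k t = 0 -> open_rec k s t = t.
Proof.
  induction t; intros k s H; simpl in *; auto.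
  - destruct (Nat.eqb n k); auto; discriminate.
  - rewrite IHt; auto.
  - rewrite IHt1, IHt2; auto; lia.
  - rewrite IHt1, IHt2; auto; lia.
  - rewrite IHt; auto; lia.
Qed.

Lemma occB_open_other : forall t k s i,
  (forall j, occB j s = 0) -> i <> k -> occB i (open_rec k s t) = occB i t.
Proof.
  induction t; intros k s i Hs Hik; simpl; auto.
  - destruct (Nat.eqb_spec n k); simpl; auto.
    subst. rewrite Hs. destruct (Nat.eqb_spec k i); congruence.
Qed.

Lemma open2_compose : forall t k u v,
  (forall j, occB j u = 0) ->
  open2_rec k u v t = open_rec k v (open_rec (S k) u t).
Proof.
  induction t; intros k u v Hu; simpl; auto.
  - destruct (Nat.eqb_spec n k).
    + subst. destruct (Nat.eqb_spec k (S k)); [lia|]. simpl. rewrite Nat.eqb_refl. auto.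
    + destruct (Nat.eqb_spec n (S k)).
      * rewrite occB_zero_open; auto.
      * simpl. destruct (Nat.eqb_spec n k); [congruence|]. auto.
  - rewrite IHt; auto.
  - rewrite IHt1, IHt2; auto.
  - rewrite IHt1, IHt2; auto.
  - rewrite IHt; auto.
Qed.

Lemma occF_open : forall t k s v,
  occF v (open_rec k s t) <= occF v t + occB k t * occF v s.
Proof.
  induction t; intros k s v; simpl.
  - destruct (Nat.eqb n k); simpl; lia.
  - lia.
  - lia.
  - apply IHt.
  - specialize (IHt1 k s v); specialize (IHt2 k s v).
    assert (occB k t1 * occF v s <= Nat.max (occB k t1) (occB k t2) * occF v s)
      by (apply Nat.mul_le_mono_r; lia).
    assert (occB k t2 * occF v s <= Nat.max (occB k t1) (occB k t2) * occF v s)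
      by (apply Nat.mul_le_mono_r; lia).
    lia.
  - specialize (IHt1 k s v); specialize (IHt2 k s v). nia.
  - specialize (IHt k s v). nia.
Qed.

Lemma occF_open_mono : forall t k s v, occF v t <= occF v (open_rec k s t).
Proof.
  induction t; intros k s v; simpl; try lia.
  - apply IHt.
  - specialize (IHt1 k s v); specialize (IHt2 k s v); lia.
  - specialize (IHt1 k s v); specialize (IHt2 k s v); lia.
  - specialize (IHt k s v); lia.
Qed.

Lemma occF_open2_mono : forall t k u s v, occF v t <= occF v (open2_rec k u s t).
Proof.
  induction t; intros k u s v; simpl; try lia.
  - apply IHt.
  - specialize (IHt1 k u s v); specialize (IHt2 k u s v); lia.
  - specialize (IHt1 k u s v); specialize (IHt2 k u s v); lia.
  - specialize (IHt k u s v); lia.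
Qed.


Lemma occF_open_fresh : forall t k v,
  ~ In v (fv t) -> occF v (open_rec k (FVar (fst v) (snd v)) t) = occB k t.
Proof.
  induction t; intros k v H; simpl in *.
  - destruct (Nat.eqb n k); simpl; auto.
    destruct v as [x a]; cbn [fst snd occF]. destruct (var_eq_dec (x, a) (x, a)); congruence.
  - destruct (var_eq_dec v (n, t)); auto. subst; tauto.
  - auto.
  - auto.
  - rewrite in_app_iff in H. rewrite IHt1, IHt2; tauto.
  - rewrite in_app_iff in H. rewrite IHt1, IHt2; tauto.
  - rewrite IHt; tauto.
Qed.

Lemma occF_open_other : forall t k s v, occF v s = 0 -> occF v (open_rec k s t) = occF v t.
Proof.
  induction t; intros k s v H; simpl; try rewrite IHt; try rewrite IHt1, IHt2; auto.
  destruct (Nat.eqb n k); simpl; auto.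
Qed.

Lemma fv_open_incl : forall t k s, incl (fv (open_rec k s t)) (fv t ++ fv s).
Proof.
  induction t; intros k s; simpl; intros x Hx.
  - destruct (Nat.eqb n k); simpl in *; tauto.
  - simpl in *; tauto.
  - simpl in *; tauto.
  - exact (IHt _ _ _ Hx).
  - rewrite in_app_iff in Hx; destruct Hx as [Hx|Hx];
    [apply IHt1 in Hx | apply IHt2 in Hx]; rewrite !in_app_iff in *; tauto.
  - rewrite in_app_iff in Hx; destruct Hx as [Hx|Hx];
    [apply IHt1 in Hx | apply IHt2 in Hx]; rewrite !in_app_iff in *; tauto.
  - exact (IHt _ _ _ Hx).
Qed.

Lemma fv_open2_incl : forall t k u s, incl (fv (open2_rec k u s t)) (fv t ++ fv u ++ fv s).
Proof.
  induction t; intros k u s; simpl; intros x Hx.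
  - destruct (Nat.eqb n k); [|destruct (Nat.eqb n (S k))]; simpl in *; rewrite ?in_app_iff; tauto.
  - simpl in *; tauto.
  - simpl in *; tauto.
  - exact (IHt _ _ _ _ Hx).
  - rewrite in_app_iff in Hx; destruct Hx as [Hx|Hx];
    [apply IHt1 in Hx | apply IHt2 in Hx]; rewrite !in_app_iff in *; tauto.
  - rewrite in_app_iff in Hx; destruct Hx as [Hx|Hx];
    [apply IHt1 in Hx | apply IHt2 in Hx]; rewrite !in_app_iff in *; tauto.
  - exact (IHt _ _ _ _ Hx).
Qed.

Lemma fv_open_mono : forall t k s, incl (fv t) (fv (open_rec k s t)).
Proof.
  induction t; intros k s x Hx; simpl in *; try tauto.
  - exact (IHt _ _ _ Hx).
  - rewrite in_app_iff in *; destruct Hx as [Hx|Hx]; [left; exact (IHt1 _ _ _ Hx)| right; exact (IHt2 _ _ _ Hx)].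
  - rewrite in_app_iff in *; destruct Hx as [Hx|Hx]; [left; exact (IHt1 _ _ _ Hx)| right; exact (IHt2 _ _ _ Hx)].
  - exact (IHt _ _ _ Hx).
Qed.

Lemma fv_open2_mono : forall t k u s, incl (fv t) (fv (open2_rec k u s t)).
Proof.
  induction t; intros k u s x Hx; simpl in *; try tauto.
  - exact (IHt _ _ _ _ Hx).
  - rewrite in_app_iff in *; destruct Hx as [Hx|Hx]; [left; exact (IHt1 _ _ _ _ Hx)| right; exact (IHt2 _ _ _ _ Hx)].
  - rewrite in_app_iff in *; destruct Hx as [Hx|Hx]; [left; exact (IHt1 _ _ _ _ Hx)| right; exact (IHt2 _ _ _ _ Hx)].
  - exact (IHt _ _ _ _ Hx).
Qed.

Lemma nfv_incl : forall t u, incl (fv t) (fv u) -> nfv t <= nfv u.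
Proof.
  intros t u H. unfold nfv. apply NoDup_incl_length. apply NoDup_nodup.
  intros x Hx. apply nodup_In. apply nodup_In in Hx. auto.
Qed.

Inductive ty2 : list ty -> term -> ty -> Prop :=
| U_BVar : forall D i a, nth_error D i = Some a -> ty2 D (BVar i) a
| U_FVar : forall D x a, ty2 D (FVar x a) a
| U_Const : forall D c, ty2 D (Const c) (const_type c)
| U_Lam : forall D a b r, ty2 (a :: D) b r -> occB 0 b <= 1 -> ty2 D (Lam a b) (TLolli a r)
| U_App : forall D t s a r, ty2 D t (TLolli a r) -> ty2 D s a -> ty2 D (App t s) r
| U_Pair : forall D t s a r, ty2 D t a -> ty2 D s r -> ty2 D (Pair t s) (TWith a r)
| U_Fst : forall D t a r, ty2 D t (TWith a r) -> ty2 D (App t (Const CTt)) a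
| U_Snd : forall D t a r, ty2 D t (TWith a r) -> ty2 D (App t (Const CFf)) r
| U_If : forall D t s r a, ty2 D t TBool -> ty2 D s a -> ty2 D r a -> ty2 D (App t (Pair s r)) a
| U_TensE : forall D t s a r sg, ty2 D t (TTensor a r) -> ty2 (r :: a :: D) s sg ->
    occB 0 s <= 1 -> occB 1 s <= 1 -> ty2 D (App t (Lam a (Lam r s))) sg
| U_ListE : forall D t s a r, ty2 D t (TList a) ->
    ty2 [] s (TLolli TDiamond (TLolli a (TLolli r r))) ->
    ty2 D (App t (Brace s)) (TLolli r r).

Ltac ty2c := first [ eapply U_Fst | eapply U_Snd | eapply U_If | eapply U_TensE
  | eapply U_ListE | eapply U_Lam | eapply U_Pair | eapply U_App | eapply U_FVar | eapply U_Const | eapply U_BVar ].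

Lemma ty2_lc : forall D t T, ty2 D t T -> forall j, length D <= j -> occB j t = 0.
Proof.
  induction 1; intros j Hj; simpl.
  - assert (i < length D) by (apply nth_error_Some; congruence).
    destruct (Nat.eqb_spec i j); lia.
  - auto.
  - auto.
  - apply IHty2; simpl; lia.
  - rewrite IHty2_1, IHty2_2; auto.
  - rewrite IHty2_1, IHty2_2; auto.
  - rewrite IHty2; auto.
  - rewrite IHty2; auto.
  - rewrite IHty2_1, IHty2_2, IHty2_3; auto.
  - rewrite IHty2_1, IHty2_2; auto; simpl; lia.
  - rewrite IHty2_1, IHty2_2; auto; simpl; lia.
Qed.

Lemma ty2_lc0 : forall t T, ty2 [] t T -> forall j, occB j t = 0.
Proof. intros; eapply ty2_lc; eauto; simpl; lia. Qed.

Lemma ty2_weaken : forall D t T, ty2 D t T -> forall D', ty2 (D ++ D') t T.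
Proof.
  induction 1; intros D'.
  1: { constructor. rewrite nth_error_app1; auto. apply nth_error_Some; congruence. }
  all: ty2c; eauto.
  apply (IHty2_2 D').
Qed.

Lemma ty2_subst : forall D0 b T, ty2 D0 b T -> forall D a s, D0 = D ++ [a] -> ty2 [] s a ->
  ty2 D (open_rec (length D) s b) T.
Proof.
  induction 1; intros D' a0 s0 HD Hs; subst; simpl.
  - destruct (Nat.lt_trichotomy i (length D')) as [Hl|[Hl|Hl]].
    + destruct (Nat.eqb_spec i (length D')); [lia|]. constructor.
      rewrite nth_error_app1 in H; auto.
    + subst. rewrite Nat.eqb_refl. rewrite nth_error_app2 in H; auto.
      rewrite Nat.sub_diag in H. simpl in H. inversion H; subst.
      apply (ty2_weaken [] s0 a Hs D').
    + rewrite nth_error_app2 in H; [|lia].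
      destruct (i - length D') eqn:E; [lia|]. simpl in H. destruct n; discriminate.
  - constructor.
  - constructor.
  - constructor.
    + apply (IHty2 (a :: D') a0 s0); auto.
    + rewrite occB_open_other; auto. intro j; apply (ty2_lc0 _ _ Hs).
  - ty2c; eauto.
  - ty2c; eauto.
  - ty2c; eauto.
  - ty2c; eauto.
  - ty2c; eauto.
  - ty2c; eauto.
    + apply (IHty2_2 (r :: a :: D') a0 s0); auto.
    + rewrite occB_open_other; auto. intro j; apply (ty2_lc0 _ _ Hs).
    + rewrite occB_open_other; auto. intro j; apply (ty2_lc0 _ _ Hs).
  - rewrite (occB_zero_open s); [|apply (ty2_lc0 _ _ H0)].
    ty2c; eauto.
Qed.

Lemma ty2_not_brace : forall D t T, ty2 D t T -> forall h, t <> Brace h.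
Proof. induction 1; intros h' E; discriminate. Qed.

Lemma ty2_len : forall D t T, ty2 D t T -> 1 <= len t.
Proof. induction 1; simpl; lia. Qed.

Fixpoint empty (a : ty) : bool :=
  match a with
  | TDiamond => true
  | TBool => false
  | TLolli a r => negb (empty a) && empty r
  | TTensor a r => empty a || empty r
  | TWith a r => empty a || empty r
  | TList _ => false
  end.

Lemma diamond_gen : forall D t T, ty2 D t T -> empty T = true ->
  (exists v, In v (fv t)) \/
  (exists i e, 1 <= occB i t /\ nth_error D i = Some e /\ empty e = true).
Proof.
  induction 1; intros HE; simpl in *.
  - right. exists i, a. rewrite Nat.eqb_refl. auto.
  - left. exists (x, a). auto.
  - destruct c; simpl in HE; try discriminate.
    destruct (empty t), (empty t0); discriminate.
  - apply andb_prop in HE as [H1 H2]. destruct (IHty2 H2) as [[v Hv]|[i [e [H3 [H4 H5]]]]].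
    + left; eauto.
    + destruct i as [|j]; simpl in H4.
      * inversion H4; subst. rewrite H5 in H1; discriminate.
      * right; exists j, e; auto.
  - destruct (empty a) eqn:Ea.
    + destruct (IHty2_2 eq_refl) as [[v Hv]|[i [e [H3 [H4 H5]]]]].
      * left; exists v; rewrite in_app_iff; auto.
      * right; exists i, e; split; [lia|auto].
    + simpl in IHty2_1. rewrite HE in IHty2_1.
      destruct (IHty2_1 eq_refl) as [[v Hv]|[i [e [H3 [H4 H5]]]]].
      * left; exists v; rewrite in_app_iff; auto.
      * right; exists i, e; split; [lia|auto].
  - apply orb_prop in HE as [HE|HE].
    + destruct (IHty2_1 HE) as [[v Hv]|[i [e [H3 [H4 H5]]]]].
      * left; exists v; rewrite in_app_iff; auto.
      * right; exists i, e; split; [lia|auto].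
    + destruct (IHty2_2 HE) as [[v Hv]|[i [e [H3 [H4 H5]]]]].
      * left; exists v; rewrite in_app_iff; auto.
      * right; exists i, e; split; [lia|auto].
  - simpl in IHty2; rewrite HE in IHty2.
    destruct (IHty2 eq_refl) as [[v Hv]|[i [e [H3 [H4 H5]]]]].
    + left; exists v; rewrite in_app_iff; auto.
    + right; exists i, e; split; [lia|auto].
  - simpl in IHty2; rewrite HE, orb_true_r in IHty2.
    destruct (IHty2 eq_refl) as [[v Hv]|[i [e [H3 [H4 H5]]]]].
    + left; exists v; rewrite in_app_iff; auto.
    + right; exists i, e; split; [lia|auto].
  - destruct (IHty2_2 HE) as [[v Hv]|[i [e [H3 [H4 H5]]]]].
    + left; exists v; rewrite !in_app_iff; auto.
    + right; exists i, e; split; [lia|auto].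
  - destruct (IHty2_2 HE) as [[v Hv]|[i [e [H3 [H4 H5]]]]].
    + left; exists v; rewrite !in_app_iff; auto.
    + destruct i as [|[|j]]; simpl in H4.
      * inversion H4; subst. simpl in IHty2_1; rewrite H5, orb_true_r in IHty2_1.
        destruct (IHty2_1 eq_refl) as [[v Hv]|[i [e' [H6 [H7 H8]]]]].
        -- left; exists v; rewrite in_app_iff; auto.
        -- right; exists i, e'; split; [lia|auto].
      * inversion H4; subst. simpl in IHty2_1; rewrite H5 in IHty2_1.
        destruct (IHty2_1 eq_refl) as [[v Hv]|[i [e' [H6 [H7 H8]]]]].
        -- left; exists v; rewrite in_app_iff; auto.
        -- right; exists i, e'; split; [lia|auto].
      * right; exists j, e; split; [lia|auto].
  - destruct (empty r); discriminate.
Qed.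

Lemma diamond0 : forall t T, ty2 [] t T -> empty T = true -> exists v, In v (fv t).
Proof.
  intros t T H HE. destruct (diamond_gen _ _ _ H HE) as [H1|[i [e [_ [H2 _]]]]]; auto.
  destruct i; discriminate.
Qed.

Lemma cons1 : forall D a d T, ty2 D (App (Const (CCons a)) d) T ->
  T = TLolli a (TLolli (TList a) (TList a)) /\ ty2 D d TDiamond.
Proof.
  intros D a d T H. inversion H; subst;
  match goal with H' : ty2 _ (Const _) _ |- _ => inversion H'; subst end; auto.
Qed.

Lemma cons2 : forall D a d x T, ty2 D (App (App (Const (CCons a)) d) x) T ->
  T = TLolli (TList a) (TList a) /\ ty2 D d TDiamond /\ ty2 D x a.
Proof.
  intros D a d x T H. inversion H; subst;
  match goal with H' : ty2 _ (App (Const _) _) _ |- _ => apply cons1 in H' as [E1 E2] end;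
  try discriminate.
  inversion E1; subst; auto.
Qed.

Lemma cons3 : forall D a d x l T, ty2 D (App (App (App (Const (CCons a)) d) x) l) T ->
  T = TList a /\ ty2 D d TDiamond /\ ty2 D x a /\ ty2 D l (TList a).
Proof.
  intros D a d x l T H. inversion H; subst;
  match goal with H' : ty2 _ (App (App (Const _) _) _) _ |- _ => apply cons2 in H' as [E1 [E2 E3]] end;
  try discriminate.
  inversion E1; subst; auto.
Qed.

Lemma tens1 : forall D a r t T, ty2 D (App (Const (CTens a r)) t) T ->
  T = TLolli r (TTensor a r) /\ ty2 D t a.
Proof.
  intros D a r t T H. inversion H; subst;
  match goal with H' : ty2 _ (Const _) _ |- _ => inversion H'; subst end; auto.
Qed.

Lemma tens2 : forall D a r t s T, ty2 D (App (App (Const (CTens a r)) t) s) T ->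
  T = TTensor a r /\ ty2 D t a /\ ty2 D s r.
Proof.
  intros D a r t s T H. inversion H; subst;
  match goal with H' : ty2 _ (App (Const _) _) _ |- _ => apply tens1 in H' as [E1 E2] end;
  try discriminate.
  inversion E1; subst; auto.
Qed.

Lemma brace_inv : forall D x h T, ty2 D (App x (Brace h)) T ->
  exists a r, T = TLolli r r /\ ty2 D x (TList a) /\
    ty2 [] h (TLolli TDiamond (TLolli a (TLolli r r))).
Proof.
  intros D x h T H. inversion H; subst.
  - match goal with H' : ty2 _ (Brace _) _ |- _ => inversion H' end.
  - eauto.
Qed.

Lemma list_entries_App_inv : forall x l p, list_entries (App x l) = Some p ->
  exists a d e n, x = App (App (Const (CCons a)) d) e /\ list_entries l = Some (a, n) /\ p = (a, S n).
Proof.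
  intros x l p H.
  destruct x as [| | | | |x1 x2|]; try discriminate.
  destruct x1 as [| | | | |y1 y2|]; try discriminate.
  destruct y1 as [| |c| | | |]; try discriminate.
  destruct c; try discriminate.
  simpl in H. destruct (list_entries l) as [[b n]|]; try discriminate.
  destruct (ty_eq_dec t b); try discriminate. subst. inversion H; subst.
  exists b, y2, x2, n; auto.
Qed.

Lemma nfv_cons : forall v u l w, In v (fv u) -> ~ In v (fv l) -> incl (fv u) (fv w) ->
  incl (fv l) (fv w) -> S (nfv l) <= nfv w.
Proof.
  intros v u l w H1 H2 H3 H4. unfold nfv.
  change (S (length (nodup var_eq_dec (fv l)))) with (length (v :: nodup var_eq_dec (fv l))).
  apply NoDup_incl_length.
  - constructor; [rewrite nodup_In; auto | apply NoDup_nodup].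
  - intros y [Hy|Hy]; apply nodup_In; [subst; auto| apply nodup_In in Hy; auto].
Qed.

Lemma count_list : forall l T b n, ty2 [] l T -> (forall v, occF v l <= 1) ->
  list_entries l = Some (b, n) -> n <= nfv l.
Proof.
  induction l; intros T b k HT HA HL; try discriminate.
  - destruct c; try discriminate. simpl in HL. inversion HL; subst. lia.
  - apply list_entries_App_inv in HL as [a [d [e [m [E1 [E2 E3]]]]]].
    subst. inversion E3; subst.
    apply cons3 in HT as [_ [Hd [_ Hl]]].
    destruct (diamond0 _ _ Hd eq_refl) as [v Hv].
    assert (Hm : m <= nfv l2).
    { apply (IHl2 _ a _ Hl); auto. intros w; specialize (HA w); simpl in HA; lia. }
    assert (~ In v (fv l2)).
    { intro Hin. apply occF_In in Hin. apply occF_In in Hv. specialize (HA v). simpl in HA. lia. }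
    assert (S (nfv l2) <= nfv (App (App (App (Const (CCons a)) d) e) l2)).
    { apply (nfv_cons v d); auto; intros y Hy; simpl; rewrite !in_app_iff; auto. }
    lia.
Qed.

Lemma list_entries_open : forall x k s p, list_entries x = Some p ->
  list_entries (open_rec k s x) = Some p.
Proof.
  induction x; intros k s p H; try discriminate.
  - simpl; auto.
  - apply list_entries_App_inv in H as [a [d [e [n [E1 [E2 E3]]]]]]. subst.
    simpl. rewrite (IHx2 k s _ E2). destruct (ty_eq_dec a a); congruence.
Qed.

Lemma list_length_open : forall x k s n, list_length x = Some n ->
  list_length (open_rec k s x) = Some n.
Proof.
  unfold list_length. intros x k s n H.
  destruct (list_entries x) as [[b m]|] eqn:E; try discriminate.
  rewrite (list_entries_open _ k s _ E); auto.
Qed.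

Lemma red_app : forall t t', red t t' -> exists a b, t = App a b.
Proof. intros t t' H; inversion H; subst; eauto; inversion H0; eauto. Qed.

Lemma red_const : forall c y, ~ red (Const c) y.
Proof. intros c y H. destruct (red_app _ _ H) as [? [? ?]]; discriminate. Qed.

Lemma red_cons1 : forall a d y, red (App (Const (CCons a)) d) y ->
  exists d', y = App (Const (CCons a)) d'.
Proof.
  intros a d y H. inversion H; subst.
  - inversion H0.
  - exfalso; eapply red_const; eauto.
  - eauto.
Qed.

Lemma red_cons2 : forall a d e y, red (App (App (Const (CCons a)) d) e) y ->
  exists d' e', y = App (App (Const (CCons a)) d') e'.
Proof.
  intros a d e y H. inversion H; subst.
  - inversion H0.
  - apply red_cons1 in H3 as [d' E]; subst; eauto.
  - eauto.
Qed.

Lemma list_entries_red : forall x x', red x x' -> forall p, list_entries x = Some p ->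
  list_entries x' = Some p.
Proof.
  induction 1; intros p Hp.
  - inversion H; subst; simpl in Hp; try discriminate.
  - apply list_entries_App_inv in Hp as [a [d [e [n [E1 [E2 E3]]]]]]. subst.
    apply red_cons2 in H as [d' [e' E]]. subst. simpl. simpl in IHred. rewrite E2.
    destruct (ty_eq_dec a a); congruence.
  - pose proof Hp as Hp'.
    apply list_entries_App_inv in Hp as [a [d [e [n [E1 [E2 E3]]]]]]. subst.
    simpl. rewrite (IHred _ E2). destruct (ty_eq_dec a a); congruence.
Qed.

Lemma list_length_red : forall x x' n, red x x' -> list_length x = Some n -> list_length x' = Some n.
Proof.
  unfold list_length. intros x x' n Hr H.
  destruct (list_entries x) as [[b m]|] eqn:E; try discriminate.
  rewrite (list_entries_red _ _ Hr _ E); auto.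
Qed.

Lemma pi_App_le : forall a b m, pi (App a b) m <= pi a m + pi b m.
Proof.
  intros a b m. destruct b; simpl; try lia.
  destruct (list_length a); try lia.
  assert (Nat.min n m * pi b m <= m * pi b m) by (apply Nat.mul_le_mono_r; lia).
  assert (Nat.min n m * len b <= m * len b) by (apply Nat.mul_le_mono_r; lia).
  lia.
Qed.

Lemma pi_App_nobrace : forall a b m, (forall h, b <> Brace h) -> pi (App a b) m = pi a m + pi b m.
Proof. intros a b m H. destruct b; simpl; auto. exfalso; eapply H; eauto. Qed.

Lemma pi_App_nolist : forall a b m, list_length a = None -> pi (App a b) m = pi a m + pi b m.
Proof. intros a b m H. destruct b; simpl; auto. rewrite H; auto. Qed.

Lemma pi_App_list : forall a h m n, list_length a = Some n ->
  pi (App a (Brace h)) m = pi a m + Nat.min n m * pi h m + Nat.min n m * len h.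
Proof. intros a h m n H. simpl. rewrite H; auto. Qed.

Lemma len_open : forall b k s, 1 <= len s ->
  len (open_rec k s b) <= len b + occB k b * (len s - 1).
Proof.
  induction b; intros k s Hs; simpl.
  - destruct (Nat.eqb n k); simpl; lia.
  - lia.
  - lia.
  - specialize (IHb (S k) s Hs); lia.
  - specialize (IHb1 k s Hs); specialize (IHb2 k s Hs).
    assert (occB k b1 * (len s - 1) <= Nat.max (occB k b1) (occB k b2) * (len s - 1))
      by (apply Nat.mul_le_mono_r; lia).
    assert (occB k b2 * (len s - 1) <= Nat.max (occB k b1) (occB k b2) * (len s - 1))
      by (apply Nat.mul_le_mono_r; lia).
    lia.
  - specialize (IHb1 k s Hs); specialize (IHb2 k s Hs). rewrite Nat.mul_add_distr_r. lia.
  - apply Nat.le_0_l.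
Qed.

Lemma pi_open : forall b k s m, (forall h, s <> Brace h) -> occB k b <= 1 ->
  pi (open_rec k s b) m <= pi b m + occB k b * pi s m.
Proof.
  induction b; intros k s m Hs Hk.
  - simpl. destruct (Nat.eqb n k); simpl; lia.
  - simpl; lia.
  - simpl; lia.
  - simpl in *. apply IHb; auto.
  - simpl in *. specialize (IHb1 k s m Hs ltac:(lia)); specialize (IHb2 k s m Hs ltac:(lia)).
    assert (occB k b1 * pi s m <= Nat.max (occB k b1) (occB k b2) * pi s m)
      by (apply Nat.mul_le_mono_r; lia).
    assert (occB k b2 * pi s m <= Nat.max (occB k b1) (occB k b2) * pi s m)
      by (apply Nat.mul_le_mono_r; lia).
    lia.
  - change (open_rec k s (App b1 b2)) with (App (open_rec k s b1) (open_rec k s b2)).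
    change (occB k (App b1 b2)) with (occB k b1 + occB k b2) in *.
    specialize (IHb1 k s m Hs ltac:(lia)).
    assert (Hc : (exists h, b2 = Brace h) \/ (forall h, b2 <> Brace h))
      by (destruct b2; eauto; right; intros; discriminate).
    destruct Hc as [[h E]|Hnb].
    + subst. change (occB k (Brace h)) with (occB k h + occB k h) in *.
      assert (Hh : occB k h = 0) by lia.
      assert (Hh' : open_rec k s (Brace h) = Brace h) by (apply occB_zero_open; simpl; lia).
      rewrite Hh'.
      destruct (list_length b1) as [n|] eqn:El.
      * rewrite (pi_App_list _ _ _ _ (list_length_open _ k s _ El)).
        rewrite (pi_App_list _ _ _ _ El). rewrite Hh in *. lia.
      * rewrite (pi_App_nolist _ _ _ El).
        pose proof (pi_App_le (open_rec k s b1) (Brace h) m). rewrite Hh. lia.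
    + specialize (IHb2 k s m Hs ltac:(lia)).
      rewrite (pi_App_nobrace _ _ _ Hnb).
      pose proof (pi_App_le (open_rec k s b1) (open_rec k s b2) m). rewrite Nat.mul_add_distr_r. lia.
  - simpl in *. assert (Hh : occB k b = 0) by lia. rewrite (occB_zero_open b k s Hh). lia.
Qed.

Lemma ty2_app_l : forall D t s T, ty2 D (App t s) T -> exists T', ty2 D t T'.
Proof. intros D t s T H; inversion H; subst; eauto. Qed.

Lemma ty2_app_r : forall D t a b T, ty2 D (App t (App a b)) T -> exists T', ty2 D (App a b) T'.
Proof. intros D t a b T H; inversion H; subst; eauto. Qed.

Lemma outer_inv : forall D X h s T, ty2 D (App (App X (Brace h)) s) T ->
  exists a, ty2 D X (TList a) /\ ty2 [] h (TLolli TDiamond (TLolli a (TLolli T T))) /\ ty2 D s T.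
Proof.
  intros D X h s T H. inversion H; subst;
  match goal with H' : ty2 _ (App X (Brace h)) _ |- _ =>
    apply brace_inv in H' as [a' [r' [E1 [E2 E3]]]] end; try discriminate.
  inversion E1; subst. eauto.
Qed.

Lemma beta_inv : forall D a b s T, ty2 D (App (Lam a b) s) T ->
  ty2 (a :: D) b T /\ occB 0 b <= 1 /\ ty2 D s a.
Proof.
  intros D a b s T H. inversion H; subst;
  match goal with H' : ty2 _ (Lam _ _) _ |- _ => inversion H'; subst end; auto.
Qed.

Lemma tens_inv : forall D a r t s b T,
  ty2 D (App (App (App (Const (CTens a r)) t) s) (Lam a (Lam r b))) T ->
  ty2 D t a /\ ty2 D s r /\ ty2 (r :: a :: D) b T /\ occB 0 b <= 1 /\ occB 1 b <= 1.
Proof.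
  intros D a r t s b T H. inversion H; subst;
  match goal with H' : ty2 _ (App (App (Const _) _) _) _ |- _ =>
    apply tens2 in H' as [E1 [E2 E3]] end; try discriminate.
  inversion E1; subst. auto.
Qed.

Lemma ty2_red : forall t t', red t t' -> forall T, ty2 [] t T -> ty2 [] t' T.
Proof.
  induction 1; intros T HT.
  - destruct H as [a b s|t s|t s|t s|t s|a r t s b|a t s|a d x l t s Hln].
    + apply beta_inv in HT as [H1 [H2 H3]].
      apply (ty2_subst _ _ _ H1 [] a s); auto.
    + inversion HT; subst;
      match goal with H' : ty2 _ (Pair _ _) _ |- _ => inversion H'; subst end; auto.
    + inversion HT; subst;
      match goal with H' : ty2 _ (Pair _ _) _ |- _ => inversion H'; subst end; auto.
    + inversion HT; subst; auto.
      match goal with H' : ty2 _ (Const _) _ |- _ => inversion H' end.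
    + inversion HT; subst; auto.
      match goal with H' : ty2 _ (Const _) _ |- _ => inversion H' end.
    + apply tens_inv in HT as [H1 [H2 [H3 [H4 H5]]]].
      unfold open2. rewrite open2_compose by (apply (ty2_lc0 _ _ H1)).
      apply (ty2_subst _ _ _ (ty2_subst _ _ _ H3 [r] a t eq_refl H1) [] r s); auto.
    + inversion HT; subst;
      match goal with H' : ty2 _ (App _ (Brace _)) _ |- _ =>
        apply brace_inv in H' as [a' [r' [E1 [E2 E3]]]] end; try discriminate.
      inversion E1; subst; auto.
    + apply outer_inv in HT as [a' [H1 [H2 H3]]].
      apply cons3 in H1 as [E [Hd [Hx Hl]]]. inversion E; subst.
      eapply U_App; [eapply U_App; [eapply U_App|]|]; eauto.
      eapply U_App; eauto. eapply U_ListE; eauto.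
  - inversion HT; subst.
    + eapply U_App; eauto.
    + eapply U_Fst; eauto.
    + eapply U_Snd; eauto.
    + eapply U_If; eauto.
    + eapply U_TensE; eauto.
    + eapply U_ListE; eauto.
  - destruct (red_app _ _ H) as [a [b E]]; subst.
    inversion HT; subst. eapply U_App; eauto.
Qed.

Lemma mul_le1 : forall o x, o <= 1 -> o * x <= x.
Proof. intros o x H. destruct o as [|[|o]]; simpl; lia. Qed.

Lemma aff_red : forall t t', red t t' -> forall T, ty2 [] t T -> (forall v, occF v t <= 1) ->
  forall v, occF v t' <= occF v t.
Proof.
  induction 1; intros T HT HA v.
  - destruct H as [a b s|t s|t s|t s|t s|a r t s b|a t s|a d x l t s Hln].
    + apply beta_inv in HT as [H1 [H2 H3]].
      pose proof (occF_open b 0 s v). pose proof (mul_le1 _ (occF v s) H2).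
      unfold open; simpl; lia.
    + simpl; lia.
    + simpl; lia.
    + simpl; lia.
    + simpl; lia.
    + apply tens_inv in HT as [H1 [H2 [H3 [H4 H5]]]].
      unfold open2. rewrite open2_compose by (apply (ty2_lc0 _ _ H1)).
      pose proof (occF_open (open_rec 1 t b) 0 s v) as H0.
      rewrite occB_open_other in H0 by (try apply (ty2_lc0 _ _ H1); lia).
      pose proof (occF_open b 1 t v).
      pose proof (mul_le1 _ (occF v s) H4). pose proof (mul_le1 _ (occF v t) H5).
      simpl; lia.
    + simpl; lia.
    + specialize (HA v). simpl in *. lia.
  - destruct (ty2_app_l _ _ _ _ HT) as [T' HT'].
    assert (forall w, occF w t <= 1) by (intro w; specialize (HA w); simpl in HA; lia).
    specialize (IHred T' HT' H0 v). simpl; lia.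
  - destruct (red_app _ _ H) as [a [b E]]; subst.
    destruct (ty2_app_r _ _ _ _ _ HT) as [T' HT'].
    assert (forall w, occF w (App a b) <= 1) by (intro w; specialize (HA w); cbn [occF] in *; lia).
    specialize (IHred T' HT' H0 v). cbn [occF] in *; lia.
Qed.

Lemma fv_red : forall t t', red t t' -> incl (fv t') (fv t).
Proof.
  induction 1; intros y Hy.
  - destruct H as [a b s|t s|t s|t s|t s|a r t s b|a t s|a d x l t s Hln]; simpl in *; rewrite ?in_app_iff in *.
    + apply fv_open_incl in Hy. rewrite in_app_iff in Hy. tauto.
    + tauto.
    + tauto.
    + tauto.
    + tauto.
    + apply fv_open2_incl in Hy. rewrite !in_app_iff in Hy. tauto.
    + tauto.
    + tauto.
  - simpl in *. rewrite in_app_iff in *. destruct Hy; [left; apply IHred|]; auto.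
  - simpl in *. rewrite in_app_iff in *. destruct Hy; [|right; apply IHred]; auto.
Qed.

Lemma list_length_cons : forall a d x l n n',
  list_length (App (App (App (Const (CCons a)) d) x) l) = Some n' ->
  list_length l = Some n -> n' = S n.
Proof.
  unfold list_length. intros a d x l n n' H1 H2. simpl in H1.
  destruct (list_entries l) as [[b m]|]; try discriminate.
  inversion H2; subst. destruct (ty_eq_dec a b); try discriminate. inversion H1; auto.
Qed.

Lemma decrease : forall t t', red t t' -> forall T N, ty2 [] t T ->
  (forall v, occF v t <= 1) -> nfv t <= N -> pi t' N + len t' < pi t N + len t.
Proof.
  induction 1; intros T N HT HA HN.
  - destruct H as [a b s|t s|t s|t s|t s|a r t s b|a t s|a d x l t s Hln].
    + apply beta_inv in HT as [H1 [H2 H3]].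
      rewrite (pi_App_nolist (Lam a b) s N eq_refl).
      pose proof (pi_open b 0 s N (ty2_not_brace _ _ _ H3) H2).
      pose proof (len_open b 0 s (ty2_len _ _ _ H3)).
      pose proof (mul_le1 _ (pi s N) H2). pose proof (mul_le1 _ (len s - 1) H2).
      pose proof (ty2_len _ _ _ H3).
      unfold open; simpl; lia.
    + simpl; lia.
    + simpl; lia.
    + simpl; lia.
    + simpl; lia.
    + apply tens_inv in HT as [H1 [H2 [H3 [H4 H5]]]].
      unfold open2. rewrite open2_compose by (apply (ty2_lc0 _ _ H1)).
      assert (Hoc : occB 0 (open_rec 1 t b) = occB 0 b)
        by (apply occB_open_other; [apply (ty2_lc0 _ _ H1)| lia]).
      pose proof (pi_open (open_rec 1 t b) 0 s N (ty2_not_brace _ _ _ H2) ltac:(lia)).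
      pose proof (pi_open b 1 t N (ty2_not_brace _ _ _ H1) H5).
      pose proof (len_open (open_rec 1 t b) 0 s (ty2_len _ _ _ H2)).
      pose proof (len_open b 1 t (ty2_len _ _ _ H1)).
      rewrite Hoc in *.
      pose proof (mul_le1 _ (pi s N) H4). pose proof (mul_le1 _ (len s - 1) H4).
      pose proof (mul_le1 _ (pi t N) H5). pose proof (mul_le1 _ (len t - 1) H5).
      rewrite (pi_App_nobrace _ (Lam a (Lam r b)) N) by discriminate.
      rewrite (pi_App_nolist (App (Const (CTens a r)) t) s N eq_refl).
      rewrite (pi_App_nolist (Const (CTens a r)) t N eq_refl).
      simpl; lia.
    + apply outer_inv in HT as [a' [_ [_ H3]]].
      rewrite (pi_App_nobrace _ s N (ty2_not_brace _ _ _ H3)).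
      simpl; lia.
    + apply outer_inv in HT as [a' [H1 [H2 H3]]].
      pose proof H1 as H1'.
      apply cons3 in H1 as [E [Hd [Hx Hl]]]. inversion E; subst.
      destruct (list_length l) as [n|] eqn:En; [|congruence].
      assert (Hent : exists b, list_entries l = Some (b, n)).
      { unfold list_length in En. destruct (list_entries l) as [[b m]|]; try discriminate.
        inversion En; subst; eauto. }
      destruct Hent as [bt Hent].
      assert (Hn : n <= nfv l).
      { apply (count_list l (TList a) bt n Hl); auto.
        intro w; specialize (HA w); simpl in HA; lia. }
      destruct (diamond0 _ _ Hd eq_refl) as [v Hv].
      assert (~ In v (fv l)).
      { intro Hin. apply occF_In in Hin. apply occF_In in Hv. specialize (HA v). simpl in HA. lia. }
      assert (S (nfv l) <= nfv (App (App (App (App (App (Const (CCons a)) d) x) l) (Brace t)) s)).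
      { apply (nfv_cons v d); auto; intros y Hy; simpl; rewrite !in_app_iff; auto. }
      assert (HSn : S n <= N) by lia.
      pose proof (ty2_not_brace _ _ _ H3) as Hsnb.
      rewrite (pi_App_nobrace _ s N Hsnb).
      assert (HL : pi (App (App (App (Const (CCons a)) d) x) l) N = pi d N + pi x N + pi l N).
      { rewrite (pi_App_nolist (App (App (Const (CCons a)) d) x) l N eq_refl),
          (pi_App_nolist (App (Const (CCons a)) d) x N eq_refl),
          (pi_App_nolist (Const (CCons a)) d N eq_refl). simpl; lia. }
      pose proof (pi_App_le (App (App t d) x) (App (App l (Brace t)) s) N) as P1.
      pose proof (pi_App_le (App t d) x N) as P2.
      pose proof (pi_App_le t d N) as P3.
      rewrite (pi_App_nobrace (App l (Brace t)) s N Hsnb) in P1.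
      rewrite (pi_App_list _ _ _ _ En) in P1.
      rewrite Nat.min_l in P1 by lia.
      destruct (list_length (App (App (App (Const (CCons a)) d) x) l)) as [n'|] eqn:En'.
      * pose proof (list_length_cons _ _ _ _ _ _ En' En); subst.
        rewrite (pi_App_list _ _ _ _ En'). rewrite Nat.min_l by lia.
        rewrite HL. rewrite !Nat.mul_succ_l. cbn [len]. lia.
      * rewrite (pi_App_nolist _ _ _ En'). rewrite HL.
        assert (S n * pi t N <= N * pi t N) by (apply Nat.mul_le_mono_r; lia).
        assert (S n * len t <= N * len t) by (apply Nat.mul_le_mono_r; lia).
        rewrite !Nat.mul_succ_l in *. change (pi (Brace t) N) with (N * pi t N + N * len t). cbn [len]. lia.
  - destruct (ty2_app_l _ _ _ _ HT) as [T' HT'].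
    assert (HA' : forall w, occF w t <= 1) by (intro w; specialize (HA w); simpl in HA; lia).
    assert (HN' : nfv t <= N).
    { eapply Nat.le_trans; [|exact HN]. apply nfv_incl. intros y Hy; simpl; rewrite in_app_iff; auto. }
    specialize (IHred T' N HT' HA' HN').
    assert (Hc : (exists h, s = Brace h) \/ (forall h, s <> Brace h))
      by (destruct s; eauto; right; intros; discriminate).
    destruct Hc as [[h E]|Hnb].
    + subst. destruct (list_length t) as [n|] eqn:El.
      * rewrite (pi_App_list _ _ _ _ El), (pi_App_list _ _ _ _ (list_length_red _ _ _ H El)).
        cbn [len]; lia.
      * rewrite (pi_App_nolist t (Brace h) N El). pose proof (pi_App_le t' (Brace h) N). cbn [len] in *; lia.
    + rewrite (pi_App_nobrace t s N Hnb). pose proof (pi_App_le t' s N). cbn [len]. lia.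
  - destruct (red_app _ _ H) as [a [b E]]; subst.
    destruct (ty2_app_r _ _ _ _ _ HT) as [T' HT'].
    assert (HA' : forall w, occF w (App a b) <= 1) by (intro w; specialize (HA w); cbn [occF] in *; lia).
    assert (HN' : nfv (App a b) <= N).
    { eapply Nat.le_trans; [|exact HN]. apply nfv_incl. intros y Hy.
      change (In y (fv t ++ fv (App a b))). rewrite in_app_iff; auto. }
    specialize (IHred T' N HT' HA' HN').
    rewrite (pi_App_nobrace t (App a b) N) by discriminate.
    pose proof (pi_App_le t s' N). cbn [len] in *. lia.
Qed.

Lemma fv_ctx : forall G t T, typed G t T -> incl (fv t) G.
Proof.
  induction 1; intros v Hv; simpl in *; rewrite ?in_app_iff in Hv.
  - destruct Hv as [Hv|[]]; subst; auto.
  - destruct Hv.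
  - assert (Hv' := fv_open_mono b 0 (FVar x a) v Hv).
    apply IHtyped in Hv'. apply H0 in Hv'. destruct Hv'; auto. subst; contradiction.
  - apply H2. destruct Hv; [left; apply IHtyped1 | right; apply IHtyped2]; auto.
  - rewrite ?in_app_iff in Hv. destruct Hv; [apply IHtyped1 | apply IHtyped2]; auto.
  - destruct Hv as [Hv|[]]; apply IHtyped; auto.
  - destruct Hv as [Hv|[]]; apply IHtyped; auto.
  - apply H3. rewrite ?in_app_iff in Hv. destruct Hv as [Hv|[Hv|Hv]];
      [left; apply IHtyped1 | right; apply IHtyped2 | right; apply IHtyped3]; auto.
  - apply H8. destruct Hv as [Hv|Hv]; [left; apply IHtyped1; auto|right].
    assert (Hv' := fv_open2_mono s 0 (FVar x a) (FVar y r) v Hv).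
    apply IHtyped2 in Hv'. apply H5 in Hv'. destruct Hv' as [Hv'|[Hv'|Hv']]; auto; subst; contradiction.
  - destruct Hv as [Hv|Hv]; [apply IHtyped1; auto|]. apply IHtyped2 in Hv. destruct Hv.
Qed.

Lemma aff_typed : forall G t T, typed G t T -> forall v, occF v t <= 1.
Proof.
  induction 1; intros v; simpl.
  - destruct (var_eq_dec v (x, a)); lia.
  - lia.
  - pose proof (occF_open_mono b 0 (FVar x a) v). specialize (IHtyped v). unfold open in *; lia.
  - specialize (IHtyped1 v); specialize (IHtyped2 v).
    destruct (occF v t) eqn:E1; [lia|]. destruct (occF v s) eqn:E2; [lia|].
    exfalso. apply (H1 v); [apply (fv_ctx _ _ _ H) | apply (fv_ctx _ _ _ H0)]; apply occF_In; lia.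
  - specialize (IHtyped1 v); specialize (IHtyped2 v); lia.
  - specialize (IHtyped v); lia.
  - specialize (IHtyped v); lia.
  - specialize (IHtyped1 v); specialize (IHtyped2 v); specialize (IHtyped3 v).
    destruct (occF v t) eqn:E1; [lia|].
    assert (Nat.max (occF v s) (occF v r) = 0); [|lia].
    destruct (occF v s) eqn:E2; destruct (occF v r) eqn:E3; simpl; auto; exfalso.
    + apply (H2 v); [apply (fv_ctx _ _ _ H) | apply (fv_ctx _ _ _ H1)]; apply occF_In; lia.
    + apply (H2 v); [apply (fv_ctx _ _ _ H) | apply (fv_ctx _ _ _ H0)]; apply occF_In; lia.
    + apply (H2 v); [apply (fv_ctx _ _ _ H) | apply (fv_ctx _ _ _ H0)]; apply occF_In; lia.
  - specialize (IHtyped1 v); specialize (IHtyped2 v).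
    pose proof (occF_open2_mono s 0 (FVar x a) (FVar y r) v). unfold open2 in *.
    destruct (occF v t) eqn:E1; [lia|]. destruct (occF v s) eqn:E2; [lia|].
    exfalso. assert (Hs : In v (fv s)) by (apply occF_In; lia).
    assert (Hs' := fv_open2_mono s 0 (FVar x a) (FVar y r) v Hs).
    apply (fv_ctx _ _ _ H6) in Hs'. apply H5 in Hs'.
    destruct Hs' as [Hs'|[Hs'|Hs']]; [|subst; contradiction|subst; contradiction].
    apply (H7 v); [apply (fv_ctx _ _ _ H) | ]; auto; apply occF_In; lia.
  - specialize (IHtyped1 v).
    assert (occF v s = 0); [|lia].
    apply occF_notIn. intro Hin. apply (fv_ctx _ _ _ H0) in Hin. destruct Hin.
Qed.

Fixpoint opn (k : nat) (sg : list var) (t : term) : term :=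
  match t with
  | BVar i => if Nat.leb k i then
                match nth_error sg (i - k) with Some (x, a) => FVar x a | None => BVar i end
              else BVar i
  | FVar _ _ => t
  | Const _ => t
  | Lam a b => Lam a (opn (S k) sg b)
  | Pair a b => Pair (opn k sg a) (opn k sg b)
  | App a b => App (opn k sg a) (opn k sg b)
  | Brace b => Brace (opn k sg b)
  end.

Lemma opn_open : forall t k sg x a,
  open_rec k (FVar x a) (opn (S k) sg t) = opn k ((x, a) :: sg) t.
Proof.
  induction t; intros k sg x a.
  2-7: simpl; f_equal; auto.
  unfold opn.
  destruct (Nat.lt_trichotomy n k) as [Hl|[Hl|Hl]].
  - replace (Nat.leb (S k) n) with false by (symmetry; apply Nat.leb_gt; lia).
    replace (Nat.leb k n) with false by (symmetry; apply Nat.leb_gt; lia).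
    cbn. replace (Nat.eqb n k) with false by (symmetry; apply Nat.eqb_neq; lia). auto.
  - subst. replace (Nat.leb (S k) k) with false by (symmetry; apply Nat.leb_gt; lia).
    rewrite Nat.leb_refl, Nat.sub_diag. cbn. rewrite Nat.eqb_refl. auto.
  - replace (Nat.leb (S k) n) with true by (symmetry; apply Nat.leb_le; lia).
    replace (Nat.leb k n) with true by (symmetry; apply Nat.leb_le; lia).
    replace (n - k) with (S (n - S k)) by lia. cbn [nth_error].
    destruct (nth_error sg (n - S k)) as [[y b]|]; cbn; auto.
    replace (Nat.eqb n k) with false by (symmetry; apply Nat.eqb_neq; lia). auto.
Qed.

Lemma occB_FVar : forall x a j, occB j (FVar x a) = 0.
Proof. reflexivity. Qed.

Lemma opn_open2 : forall t k sg x a y r,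
  open2_rec k (FVar x a) (FVar y r) (opn (S (S k)) sg t) = opn k ((y, r) :: (x, a) :: sg) t.
Proof.
  intros. rewrite open2_compose by (intro; apply occB_FVar).
  rewrite opn_open. apply opn_open.
Qed.

Lemma occB_opn : forall t k sg i, i < k -> occB i (opn k sg t) = occB i t.
Proof.
  induction t; intros k sg i Hi; simpl; auto.
  - destruct (Nat.leb_spec k n).
    + destruct (nth_error sg (n - k)) as [[y b]|]; simpl;
      replace (Nat.eqb n i) with false by (symmetry; apply Nat.eqb_neq; lia); auto.
    + auto.
  - apply IHt; lia.
Qed.

Lemma opn_nil : forall t k, opn k [] t = t.
Proof.
  induction t; intros k; simpl; try (f_equal; auto; fail).
  destruct (Nat.leb k n); auto. destruct (n - k); auto.
Qed.

Lemma opn_closed : forall t k sg, fv (opn k sg t) = [] -> opn k sg t = t.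
Proof.
  induction t; intros k sg H; simpl in *; auto.
  - destruct (Nat.leb k n); auto.
    destruct (nth_error sg (n - k)) as [[y b]|]; simpl in H; auto; discriminate.
  - rewrite IHt; auto.
  - apply app_eq_nil in H as [H1 H2]. rewrite IHt1, IHt2; auto.
  - apply app_eq_nil in H as [H1 H2]. rewrite IHt1, IHt2; auto.
  - rewrite IHt; auto.
Qed.

Ltac opn_bvar H := simpl in H;
  match type of H with
  | context [Nat.leb ?k ?n] => destruct (Nat.leb k n);
      [destruct (nth_error _ (n - k)) as [[? ?]|]|]; discriminate
  end.

Lemma opn_inv_FVar : forall t k sg x a, opn k sg t = FVar x a ->
  t = FVar x a \/ exists i, t = BVar i /\ k <= i /\ nth_error sg (i - k) = Some (x, a).
Proof.
  intros t k sg x a H. destruct t; simpl in H; try discriminate; auto.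
  right. exists n. destruct (Nat.leb_spec k n); [|discriminate].
  destruct (nth_error sg (n - k)) as [[y b]|]; inversion H; subst; auto.
Qed.

Lemma opn_inv_Const : forall t k sg c, opn k sg t = Const c -> t = Const c.
Proof. intros t k sg c H. destruct t; simpl in H; auto; try discriminate. opn_bvar H. Qed.

Lemma opn_inv_Lam : forall t k sg a b, opn k sg t = Lam a b ->
  exists b', t = Lam a b' /\ b = opn (S k) sg b'.
Proof. intros t k sg a b H. destruct t; simpl in H; try discriminate.
  - opn_bvar H.
  - inversion H; subst; eauto. Qed.

Lemma opn_inv_Pair : forall t k sg a b, opn k sg t = Pair a b ->
  exists a' b', t = Pair a' b' /\ a = opn k sg a' /\ b = opn k sg b'.
Proof. intros t k sg a b H. destruct t; simpl in H; try discriminate.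
  - opn_bvar H.
  - inversion H; subst; eauto. Qed.

Lemma opn_inv_App : forall t k sg a b, opn k sg t = App a b ->
  exists a' b', t = App a' b' /\ a = opn k sg a' /\ b = opn k sg b'.
Proof. intros t k sg a b H. destruct t; simpl in H; try discriminate.
  - opn_bvar H.
  - inversion H; subst; eauto. Qed.

Lemma opn_inv_Brace : forall t k sg b, opn k sg t = Brace b ->
  exists b', t = Brace b' /\ b = opn k sg b'.
Proof. intros t k sg b H. destruct t; simpl in H; try discriminate.
  - opn_bvar H.
  - inversion H; subst; eauto. Qed.

Lemma translate : forall G u T, typed G u T -> forall sgm t, u = opn 0 sgm t -> ty2 (map snd sgm) t T.
Proof.
  induction 1; intros sgm t0 E; symmetry in E.
  - apply opn_inv_FVar in E as [E|[i [E1 [E2 E3]]]]; subst.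
    + constructor.
    + constructor. rewrite nth_error_map. rewrite Nat.sub_0_r in E3. unfold var in *. rewrite E3. auto.
  - apply opn_inv_Const in E; subst. constructor.
  - apply opn_inv_Lam in E as [b' [E1 E2]]; subst.
    constructor.
    + apply (IHtyped ((x, a) :: sgm)). unfold open. apply opn_open.
    + rewrite <- (occB_opn b' 1 sgm 0) by lia.
      rewrite <- (occF_open_fresh (opn 1 sgm b') 0 (x, a)) by auto.
      apply (aff_typed _ _ _ H1).
  - apply opn_inv_App in E as [a' [b' [E1 [E2 E3]]]]; subst.
    eapply U_App; eauto.
  - apply opn_inv_Pair in E as [a' [b' [E1 [E2 E3]]]]; subst.
    eapply U_Pair; eauto.
  - apply opn_inv_App in E as [a' [b' [E1 [E2 E3]]]]; subst.
    symmetry in E3. apply opn_inv_Const in E3; subst. eapply U_Fst; eauto.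
  - apply opn_inv_App in E as [a' [b' [E1 [E2 E3]]]]; subst.
    symmetry in E3. apply opn_inv_Const in E3; subst. eapply U_Snd; eauto.
  - apply opn_inv_App in E as [a' [b' [E1 [E2 E3]]]]; subst.
    symmetry in E3. apply opn_inv_Pair in E3 as [s' [r' [F1 [F2 F3]]]]; subst.
    eapply U_If; eauto.
  - apply opn_inv_App in E as [a' [b' [E1 [E2 E3]]]]; subst.
    symmetry in E3. apply opn_inv_Lam in E3 as [c [F1 F2]]; subst.
    symmetry in F2. apply opn_inv_Lam in F2 as [s' [F3 F4]]; subst.
    assert (Hop : open2 (opn 2 sgm s') (FVar x a) (FVar y r) = opn 0 ((y, r) :: (x, a) :: sgm) s')
      by (unfold open2; apply opn_open2).
    eapply U_TensE; eauto.
    + apply (IHtyped2 ((y, r) :: (x, a) :: sgm)). auto.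
    + rewrite <- (occB_opn s' 2 sgm 0) by lia.
      pose proof (aff_typed _ _ _ H6 (y, r)) as Ha.
      unfold open2 in Ha. rewrite open2_compose in Ha by (intro; apply occB_FVar).
      rewrite (occF_open_fresh _ 0 (y, r)) in Ha.
      * rewrite occB_open_other in Ha by (auto; intro; apply occB_FVar). auto.
      * intro Hin. apply fv_open_incl in Hin. rewrite in_app_iff in Hin.
        destruct Hin as [Hin|[Hin|[]]]; [contradiction|]. inversion Hin; subst; auto.
    + rewrite <- (occB_opn s' 2 sgm 1) by lia.
      pose proof (aff_typed _ _ _ H6 (x, a)) as Ha.
      unfold open2 in Ha. rewrite open2_compose in Ha by (intro; apply occB_FVar).
      rewrite occF_open_other in Ha.
      * rewrite (occF_open_fresh _ 1 (x, a)) in Ha by auto. exact Ha.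
      * cbn [occF]. destruct (var_eq_dec (x, a) (y, r)); [contradiction|reflexivity].
  - apply opn_inv_App in E as [a' [b' [E1 [E2 E3]]]]; subst.
    symmetry in E3. apply opn_inv_Brace in E3 as [s' [F1 F2]]; subst.
    assert (Hfv : fv (opn 0 sgm s') = []).
    { pose proof (fv_ctx _ _ _ H0) as Hi. destruct (fv (opn 0 sgm s')) as [|w l] eqn:Ew; auto.
      exfalso. apply (Hi w). left; auto. }
    pose proof (opn_closed _ _ _ Hfv) as Hc. rewrite Hc in *.
    eapply U_ListE; eauto.
    apply (IHtyped2 []). symmetry; apply opn_nil.
Qed.

Lemma typed_ty2 : forall G t T, typed G t T -> ty2 [] t T.
Proof. intros G t T H. apply (translate _ _ _ H []). symmetry; apply opn_nil. Qed.

Theorem theorem4p8 (G : ctx) (t : term) (tau : ty) :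
  typed G t tau ->
  (forall (N : nat) (t' : term),
      nfv t <= N -> red t t' -> pi t N + len t > pi t' N + len t')
  /\
  (forall (k : nat) (ts : nat -> term),
      ts 0 = t -> (forall i, i < k -> red (ts i) (ts (S i))) ->
      k <= pi t (nfv t) + len t).
Proof.
  intros HT.
  pose proof (typed_ty2 _ _ _ HT) as H2.
  pose proof (aff_typed _ _ _ HT) as HA.
  split.
  - intros N t' HN Hr. unfold gt. eapply decrease; eauto.
  - intros k ts H0 Hred.
    set (N := nfv t).
    assert (Hinv : forall i, i <= k -> ty2 [] (ts i) tau /\ (forall v, occF v (ts i) <= 1) /\
      incl (fv (ts i)) (fv t) /\ pi (ts i) N + len (ts i) + i <= pi t N + len t).
    { induction i; intros Hi.
      - rewrite H0. repeat split; auto. intros y Hy; auto. lia.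
      - destruct (IHi ltac:(lia)) as [P1 [P2 [P3 P4]]].
        assert (Hr : red (ts i) (ts (S i))) by (apply Hred; lia).
        repeat split.
        + eapply ty2_red; eauto.
        + intro v. pose proof (aff_red _ _ Hr _ P1 P2 v). specialize (P2 v). lia.
        + intros y Hy. apply P3. apply (fv_red _ _ Hr); auto.
        + pose proof (decrease _ _ Hr tau N P1 P2 (nfv_incl _ _ P3)). lia. }
    destruct (Hinv k (le_n k)) as [_ [_ [_ P]]]. lia.
Qed.
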